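(* Let $a_1,a_2$ be nonzero integers, $\alpha,\beta$ the roots of $X^2-a_1X-a_2$, $\gamma:=\alpha/\beta$ assumed not a root of unity, $\Delta:=a_1^2+4a_2$ assumed not a square, $\Delta_0$ its squarefree part, $K:=\mathbb{Q}(\sqrt\Delta)$, and $h$ the greatest positive integer such that $\gamma$ is an $h$th power in $K$. Let $d$ be an odd positive integer with $3\nmid d$ whenever $\Delta_0=-3$. Then \[ \sum_{v\mid d^\infty}\sum_{a\mid d}\mu(a)\,\delta_{U,dv,av}=\delta_U(d), \] where \[ \delta_U(d):=\frac1d\left(\frac{1}{(d^\infty,h)}+\eta_U(d)\right)\prod_{p\mid d}\left(1-\frac1{p^2}\right)^{-1}, \] with $\eta_U(d):=0$ if $\Delta>0$ or $\Delta_0\not\equiv1\pmod4$ or $\Delta_0\nmid d^\infty$, and $\eta_U(d):=\frac{(d^\infty,h)}{[(d^\infty,h),\,\Delta_0/(d,\Delta_0)]^2}$ otherwise.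
   Context: For positive integers $m\mid n$: $\delta_{U,n,m}:=\frac{(m,h)}{\varphi(n)m}$ if $\Delta>0$ or $\Delta_0\not\equiv1\pmod4$ or $\Delta_0\nmid n$, and $\delta_{U,n,m}:=\frac{2(m,h)}{\varphi(n)m}$ otherwise. $d^\infty=\prod_{p\mid d}p^\infty$: the sum over $v\mid d^\infty$ runs over positive integers all of whose prime factors divide $d$; $(d^\infty,h)$ is the largest divisor of $h$ composed of primes dividing $d$; $\Delta_0\mid d^\infty$ means every prime factor of $\Delta_0$ divides $d$; $[\cdot,\cdot]$ denotes lcm; $\mu$ is the Möbius function. *)

(* Defs.v *)
From HB Require Import structures.
From mathcomp Require Import all_boot all_order all_algebra all_field.
From mathcomp Require Import all_classical all_reals all_analysis.
Set Implicit Arguments. Unset Strict Implicit. Unset Printing Implicit Defensive.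
Import Order.TTheory GRing.Theory Num.Theory.
Local Open Scope ring_scope.

Definition moebius (n : nat) : int :=
  if n == 0%N then 0
  else if all (fun p => logn p n == 1%N) (primes n) then (-1) ^+ size (primes n)
  else 0.

Definition sqfree_part (z : int) : int :=
  sgz z * (\prod_(p <- primes `|z|%N) (p ^ (logn p `|z|%N %% 2))%N)%:Z.

Definition quadK (D : int) : pred algC :=
  fun z => `[< exists x y : rat, z = ratr x + ratr y * sqrtC (D%:~R) >].

Definition is_pow_in (D : int) (n : nat) (z : algC) : Prop :=
  exists k : algC, k \in quadK D /\ k ^+ n = z.

Definition is_max_pow (D : int) (g : algC) (h : nat) : Prop :=
  (0 < h)%N /\ is_pow_in D h g /\ forall m : nat, (0 < m)%N -> is_pow_in D m g -> (m <= h)%N.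

Definition excep (D D0 : int) (cond : bool) : bool :=
  ~~ ((0 < D) || ((D0 %% 4)%Z != 1) || ~~ cond).

Definition deltaU_nm (R : realType) (D D0 : int) (h n m : nat) : R :=
  (if excep D D0 (D0 %| n%:Z)%Z then 2 else 1) * (gcdn m h)%:R / ((totient n)%:R * m%:R).

(* (d^infty, h) : largest divisor of h composed of primes dividing d *)
Definition dinf_gcd (d h : nat) : nat := h`_(\pi(d)).

Definition etaU (R : realType) (D D0 : int) (h d : nat) : R :=
  if excep D D0 (\pi(d).-nat `|D0|%N)
  then (dinf_gcd d h)%:R
       / ((lcmn (dinf_gcd d h) (`|D0|%N %/ gcdn d `|D0|%N))%:R ^+ 2)
  else 0.

Definition deltaU (R : realType) (D D0 : int) (h d : nat) : R :=
  d%:R^-1 * ((dinf_gcd d h)%:R^-1 + etaU R D D0 h d)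
  * \prod_(p <- primes d) (1 - (p%:R ^+ 2)^-1)^-1.

(* summand indexed by v (zero unless v | d^infty) *)
Definition lhs_term (R : realType) (D D0 : int) (h d v : nat) : R :=
  if \pi(d).-nat v
  then \sum_(a <- divisors d) (moebius a)%:~R * deltaU_nm R D D0 h (d * v) (a * v)
  else 0.

(* Main.v *)
Require Import Defs.
From HB Require Import structures.
From mathcomp Require Import all_boot all_order all_algebra all_field.
From mathcomp Require Import all_classical all_reals all_analysis.
From mathcomp Require Import zify ring lra.
Import Order.TTheory GRing.Theory Num.Theory numFieldNormedType.Exports.
Local Open Scope ring_scope.
Local Open Scope classical_set_scope.
Set Implicit Arguments. Unset Strict Implicit.
Lemma moebius1 : moebius 1 = 1.
Proof. by []. Qed.

Lemma moebius_sq q a : prime q -> (0 < a)%N -> (q ^ 2 %| a)%N -> moebius a = 0.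
Proof.
move=> pq a0 qa; rewrite /moebius; have -> : (a == 0%N) = false by lia.
case: ifP => // /allP /(_ q).
have qin : q \in primes a.
  by rewrite mem_primes pq a0 /= (dvdn_trans _ qa) // dvdn_exp.
move=> /(_ qin) /eqP H; by move: qa; rewrite pfactor_dvdn // H.
Qed.

Lemma primes_mulp q b : prime q -> (0 < b)%N -> ~~ (q %| b)%N ->
  perm_eq (primes (q * b)) (q :: primes b).
Proof.
move=> pq b0 qb; apply: uniq_perm.
- exact: primes_uniq.
- by rewrite /= primes_uniq andbT mem_primes (negPf qb) !andbF.
- move=> p; rewrite (primesM _ (prime_gt0 pq) b0) primes_prime //.
  by rewrite !inE.
Qed.

Lemma moebius_mulp q b : prime q -> (0 < b)%N -> ~~ (q %| b)%N ->
  moebius (q * b) = - moebius b.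
Proof.
move=> pq b0 qb; have pe := primes_mulp pq b0 qb.
rewrite /moebius.
have -> : (q * b == 0%N) = false by have := prime_gt0 pq; lia.
have -> : (b == 0%N) = false by lia.
rewrite (perm_all _ pe) (perm_size pe) /=.
have -> : logn q (q * b) = 1%N.
  by rewrite lognM ?(prime_gt0 pq) // logn_prime // eqxx logn_coprime // prime_coprime.
rewrite eqxx /=.
have -> : all (fun p => logn p (q * b) == 1%N) (primes b) =
          all (fun p => logn p b == 1%N) (primes b).
  apply: eq_in_all => p pp; move: (pp); rewrite mem_primes => /and3P[ppr _ _].
  rewrite lognM ?(prime_gt0 pq) // logn_prime //.
  case: (p =P q) => [Epq | _].
    by subst p; rewrite mem_primes (negPf qb) !andbF in pp.
  by rewrite add0n.
case: ifP => _; last by rewrite oppr0.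
by rewrite exprS mulN1r.
Qed.

Lemma dvd_coprime_pow q b j m : prime q -> ~~ (q %| b)%N -> (b %| q ^ j * m)%N -> (b %| m)%N.
Proof.
move=> pq qb; rewrite Gauss_dvdr //; rewrite coprime_sym coprimeXl //.
by rewrite prime_coprime.
Qed.

Lemma moebius_red (R : realType) (F : nat -> R) q k d' :
  prime q -> (0 < k)%N -> (0 < d')%N -> ~~ (q %| d')%N ->
  \sum_(a <- divisors (q ^ k * d')) (moebius a)%:~R * F a =
  \sum_(b <- divisors d') (moebius b)%:~R * (F b - F (q * b)%N).
Proof.
move=> pq k0 d0 qd.
have q0 := prime_gt0 pq.
set n := (q ^ k * d')%N.
have n0 : (0 < n)%N by rewrite /n muln_gt0 expn_gt0 q0.
set G := fun a => (moebius a)%:~R * F a.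
have E1 : \sum_(a <- divisors n | ~~ (q %| a)%N) G a = \sum_(b <- divisors d') G b.
  rewrite -big_filter; apply: perm_big; apply: uniq_perm.
  - by rewrite filter_uniq // divisors_uniq.
  - exact: divisors_uniq.
  move=> x; rewrite mem_filter -!dvdn_divisors //.
  apply/andP/idP => [[qx xn] | xd].
    exact: dvd_coprime_pow qx xn.
  split; last by rewrite /n dvdn_mull.
  by apply/negP => qx; move/negP: qd; apply; apply: dvdn_trans qx xd.
have E2 : \sum_(a <- divisors n | (q %| a)%N) G a = \sum_(b <- divisors d') G (q * b)%N.
  rewrite (bigID (fun a => (q ^ 2 %| a)%N)) /= big1_seq ?add0r; last first.
    move=> a /andP[/andP[_ qa] ain]; rewrite /G (@moebius_sq q) ?mul0r //.
    by move: ain; rewrite -dvdn_divisors // => /dvdn_gt0; apply.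
  rewrite -big_filter -[RHS](big_map (muln q) xpredT G).
  apply: perm_big; apply: uniq_perm.
  - by rewrite filter_uniq // divisors_uniq.
  - rewrite map_inj_uniq ?divisors_uniq // => x y /eqP.
    by rewrite eqn_pmul2l // => /eqP.
  move=> x; rewrite mem_filter -dvdn_divisors //.
  apply/andP/mapP => [[/andP[qx qqx] xn] | [b bd ->]].
    exists (x %/ q)%N; last by rewrite mulnC divnK.
    rewrite -dvdn_divisors //.
    have qb : ~~ (q %| x %/ q)%N.
      apply/negP => H; move/negP: qqx; apply.
      by rewrite -(divnK qx) (expnS q 1) expn1 dvdn_pmul2r.
    apply: (@dvd_coprime_pow q _ k.-1) => //.
    by rewrite -(@dvdn_pmul2l q) // mulnA -expnS prednK // [(q * _)%N]mulnC divnK.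
  move: bd; rewrite -dvdn_divisors // => bd.
  have qb : ~~ (q %| b)%N by apply/negP => H; move/negP: qd; apply; apply: dvdn_trans H bd.
  split; last by rewrite /n -(prednK k0) expnS -mulnA dvdn_pmul2l // dvdn_mull.
  by rewrite dvdn_mulr //= expnS expn1 dvdn_pmul2l.
rewrite (bigID (fun a => (q %| a)%N)) /= E1 E2 addrC -big_split /=.
apply: eq_big_seq => b; rewrite -dvdn_divisors // => bd.
have qb : ~~ (q %| b)%N by apply/negP => H; move/negP: qd; apply; apply: dvdn_trans H bd.
rewrite /G moebius_mulp // ?(dvdn_gt0 d0 bd) //.
by rewrite intrN mulrBr mulNr.
Qed.

Lemma primes_mulpk q k b : prime q -> (0 < k)%N -> (0 < b)%N -> ~~ (q %| b)%N ->
  perm_eq (primes (q ^ k * b)) (q :: primes b).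
Proof.
move=> pq k0 b0 qb; apply: uniq_perm.
- exact: primes_uniq.
- by rewrite /= primes_uniq andbT mem_primes (negPf qb) !andbF.
- have qk0 : (0 < q ^ k)%N by rewrite expn_gt0 prime_gt0.
  move=> p; rewrite (primesM _ qk0 b0) primesX // primes_prime //.
  by rewrite !inE.
Qed.

Lemma gcd_step q x h : prime q -> (0 < x)%N -> (0 < h)%N ->
  gcdn (q * x) h = if (logn q x < logn q h)%N then (q * gcdn x h)%N else gcdn x h.
Proof.
move=> pq x0 h0; have q0 := prime_gt0 pq.
have qx0 : (0 < q * x)%N by rewrite muln_gt0 q0.
have g0 : (0 < gcdn x h)%N by rewrite gcdn_gt0 x0.
apply: eqn_from_log; first by rewrite gcdn_gt0 qx0.
  by case: ifP => _; rewrite ?muln_gt0 ?q0.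
move=> p; rewrite logn_gcd // lognM // logn_prime //.
case: ifP => H.
  rewrite (lognM _ q0 g0) (logn_prime _ pq) logn_gcd //.
  by case: eqP => [->|_] /=; lia.
rewrite logn_gcd //.
by case: eqP => [->|_] /=; lia.
Qed.

Lemma phi_sum (R : realType) d v h : (0 < d)%N -> (0 < v)%N -> (0 < h)%N ->
  \sum_(a <- divisors d) (moebius a)%:~R * ((gcdn (a * v) h)%:R / a%:R) =
  (gcdn v h)%:R * \prod_(q <- primes d)
      (if (logn q v < logn q h)%N then 0 else 1 - q%:R^-1) :> R.
Proof.
move=> + v0 h0; elim/ltn_ind: d => d IH d0.
have [d1|d1] := leqP d 1.
  have -> : d = 1%N by lia.
  by rewrite big_nil mulr1 big_seq1 moebius1 mul1n divr1 mul1r.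
set q := pdiv d; have pq : prime q by exact: pdiv_prime.
have q0 := prime_gt0 pq.
set k := logn q d.
have k0 : (0 < k)%N by rewrite logn_gt0 mem_primes pq d0 pdiv_dvd.
set d' := (d %/ q ^ k)%N.
have Ed : d = (q ^ k * d')%N by rewrite /d' mulnC divnK // pfactor_dvdnn.
have d'0 : (0 < d')%N by move: d0; rewrite Ed muln_gt0 => /andP[].
have qd' : ~~ (q %| d')%N.
  apply/negP => H.
  have : (0 < logn q d')%N by rewrite logn_gt0 mem_primes pq d'0.
  by rewrite /d' logn_div ?pfactor_dvdnn // pfactorK // subnn.
have d'd : (d' < d)%N.
  by rewrite {1}Ed -{1}(mul1n d') ltn_pmul2r // -(expn0 q) ltn_exp2l ?prime_gt1 //.
rewrite {1}Ed (moebius_red _ pq k0 d'0 qd').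
rewrite {1}Ed (perm_big _ (primes_mulpk pq k0 d'0 qd')) big_cons /=.
rewrite mulrCA -(IH d' d'd d'0) big_distrr /=.
apply: eq_big_seq => b; rewrite -dvdn_divisors // => bd.
have b0 : (0 < b)%N by apply: dvdn_gt0 bd.
have qb : ~~ (q %| b)%N by apply/negP => H; move/negP: qd'; apply; apply: dvdn_trans H bd.
have bv0 : (0 < b * v)%N by rewrite muln_gt0 b0.
rewrite -mulnA (gcd_step pq bv0 h0).

have -> : logn q (b * v) = logn q v.
  by rewrite lognM // logn_coprime // prime_coprime.
have bR : (b%:R : R) != 0 by rewrite pnatr_eq0 -lt0n.
have qR : (q%:R : R) != 0 by rewrite pnatr_eq0 -lt0n.
case: ifP => _; rewrite natrM.
  rewrite mul0r natrM; move: ((moebius b)%:~R : R) ((gcdn (b * v) h)%:R : R) => M G.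
  by field; rewrite bR qR.
move: ((moebius b)%:~R : R) ((gcdn (b * v) h)%:R : R) => M G.
by field; rewrite bR qR.
Qed.

Lemma phiR (R : realType) n : (0 < n)%N ->
  (totient n)%:R = n%:R * \prod_(p <- primes n) (1 - p%:R^-1) :> R.
Proof.
move=> n0; have En : n = (\prod_(p <- primes n) p ^ logn p n)%N.
  by rewrite {1}(prod_prime_decomp n0) prime_decompE big_map.
rewrite totientE // [in n%:R]En.
rewrite !natr_prod -big_split /=.
apply: eq_big_seq => p pin; move: (pin); rewrite mem_primes => /and3P[pp _ pn].
have e0 : (0 < logn p n)%N by rewrite logn_gt0.
rewrite natrM !natrX -(prednK e0) exprS /=.
have -> : ((p.-1)%:R : R) = p%:R - 1.
  by rewrite -[in RHS](prednK (prime_gt0 pp)) -addn1 natrD addrK.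
have pR : (p%:R : R) != 0 by rewrite pnatr_eq0 -lt0n prime_gt0.
by field.
Qed.

Lemma primes_smooth d v : (0 < d)%N -> \pi(d).-nat v -> primes (d * v) = primes d.
Proof.
move=> d0 vs; have v0 : (0 < v)%N by case/andP: vs.
apply/eq_primes => p; rewrite primesM //.
case pd: (p \in primes d) => //=.
apply/negP => pv; move/negP: pd; apply.
by have := pnatPpi vs pv.
Qed.

Lemma phi_mul_smooth (R : realType) d v : (0 < d)%N -> \pi(d).-nat v ->
  (totient (d * v))%:R = (totient d)%:R * v%:R :> R.
Proof.
move=> d0 vs; have v0 : (0 < v)%N by case/andP: vs.
rewrite !phiR ?muln_gt0 ?d0 // primes_smooth // natrM.
by rewrite mulrAC.
Qed.

Lemma prod_sqfree_dvd (L : seq nat) (b : nat -> nat) d :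
  uniq L -> all prime L -> (forall p, p \in L -> (b p < 2)%N) ->
  (forall p, p \in L -> (0 < b p)%N -> (p %| d)%N) ->
  (\prod_(p <- L) p ^ b p %| d)%N.
Proof.
elim: L => [|p L IH] /=; first by rewrite big_nil dvd1n.
move=> /andP[pL uL] /andP[pp aL] b2 bd.
rewrite big_cons Gauss_dvd.
  apply/andP; split; last first.
    apply: IH => // q qL; [apply: b2 | apply: bd]; by rewrite inE qL orbT.
  have := b2 p (mem_head _ _); case: (b p) (bd p (mem_head _ _)) => [|[|//]] H _.
    by rewrite dvd1n.
  by rewrite expn1 H.
apply: coprimeXl; rewrite prime_coprime // Euclid_dvd_prod //.
rewrite big_has; apply/negP => /hasP[q qL /=]; rewrite Euclid_dvdX // => /andP[].
rewrite dvdn_prime2 //; last by move/allP: aL; apply.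
by move=> /eqP Epq; move: pL; rewrite Epq qL.
Qed.

Lemma sqf_dvd (z : int) d : (0 < d)%N ->
  \pi(d).-nat `|sqfree_part z|%N -> (`|sqfree_part z| %| d)%N.
Proof.
move=> d0; rewrite /sqfree_part abszM.
set P := (\prod_(p <- primes `|z|%N) p ^ (logn p `|z|%N %% 2))%N.
have [z0|z0] := eqVneq z 0; first by rewrite z0 /= mul0n.
have -> : `|sgz z|%N = 1%N by case: sgzP z0.
rewrite absz_nat !mul1n => Ps.
apply: prod_sqfree_dvd.
- exact: primes_uniq.
- by apply/allP => p; rewrite mem_primes => /andP[].
- by move=> p _; rewrite ltn_pmod.
move=> p pin b0.
have pp : prime p by move: pin; rewrite mem_primes => /andP[].
have pP : (p %| P)%N.
  rewrite /P Euclid_dvd_prod // big_has; apply/hasP; exists p => //=.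
  by rewrite Euclid_dvdX // dvdnn b0.
have : p \in \pi(d).
  apply: (pnatPpi Ps); rewrite /= mem_primes pp pP andbT.
  by case/andP: Ps.
by rewrite /= mem_primes => /and3P[].
Qed.

Lemma dvd_cond (z : int) d v : (0 < d)%N -> \pi(d).-nat v ->
  (sqfree_part z %| (d * v)%:Z)%Z = \pi(d).-nat `|sqfree_part z|%N.
Proof.
move=> d0 vs; have v0 : (0 < v)%N by case/andP: vs.
rewrite dvdzE absz_nat; apply/idP/idP => [H|]; last first.
  by move/(sqf_dvd d0) => H; rewrite dvdn_mulr.
have m0 : (0 < `|sqfree_part z|)%N.
  rewrite lt0n; apply/negP => /eqP E; move: H; rewrite E dvd0n.
  by rewrite muln_eq0 => /orP[]/eqP; lia.
apply/pnatP => // p pp pm.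
have : (p %| d * v)%N by apply: dvdn_trans H.
rewrite Euclid_dvdM // => /orP[pd|pv]; first by rewrite /= mem_primes pp d0 pd.
by apply: (pnatPpi vs); rewrite /= mem_primes pp v0 pv.
Qed.

Lemma logn_dinf d h q : q \in primes d -> logn q (dinf_gcd d h) = logn q h.
Proof.
move=> qd; rewrite /dinf_gcd -logn_part partn_part ?logn_part // => x.
by rewrite /= inE => /eqP ->.
Qed.

Lemma gcd_smooth d v h : (0 < h)%N -> \pi(d).-nat v -> (dinf_gcd d h %| v)%N ->
  gcdn v h = dinf_gcd d h.
Proof.
move=> h0 vs gv; have v0 : (0 < v)%N by case/andP: vs.
rewrite -(part_pnat_id (pnat_dvd (dvdn_gcdl v h) vs)) partn_gcd //.
by rewrite (part_pnat_id vs); apply/gcdn_idPr.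
Qed.

Lemma dinf_dvd d v h : (0 < v)%N ->
  (forall q, q \in primes d -> (logn q h <= logn q v)%N) -> (dinf_gcd d h %| v)%N.
Proof.
move=> v0 H; apply/dvdn_partP => [|p]; first exact: part_gt0.
move=> pg; have pd : p \in primes d.
  by have := pnatPpi (part_pnat \pi(d) h) pg.
have pp : prime p by move: pd; rewrite mem_primes => /andP[].
by rewrite p_part pfactor_dvdn // logn_dinf // H.
Qed.

Definition cst (R : realType) (D D0 : int) (d : nat) : R :=
  if excep D D0 (\pi(d).-nat `|D0|%N) then 2 else 1.

Lemma term_eq (R : realType) (D z : int) h d v : (0 < h)%N -> (0 < d)%N ->
  lhs_term R D (sqfree_part z) h d v =
  if \pi(d).-nat v && (dinf_gcd d h %| v)%N then
    cst R D (sqfree_part z) d * (dinf_gcd d h)%:R / d%:R / (v%:R ^+ 2)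
  else 0.
Proof.
move=> h0 d0; rewrite /lhs_term; case vs: (\pi(d).-nat v) => //=.
have v0 : (0 < v)%N by case/andP: vs.
set c := cst R D (sqfree_part z) d.
have phi0 : ((totient d)%:R : R) != 0 by rewrite pnatr_eq0 -lt0n totient_gt0.
have vR : (v%:R : R) != 0 by rewrite pnatr_eq0 -lt0n.
have dR : (d%:R : R) != 0 by rewrite pnatr_eq0 -lt0n.
transitivity (c / ((totient d)%:R * v%:R * v%:R) *
  \sum_(a <- divisors d) (moebius a)%:~R * ((gcdn (a * v) h)%:R / a%:R)).
  rewrite big_distrr /=; apply: eq_big_seq => a; rewrite -dvdn_divisors // => ad.
  have aR : (a%:R : R) != 0 by rewrite pnatr_eq0 -lt0n (dvdn_gt0 d0 ad).
  rewrite /deltaU_nm dvd_cond // -/(cst R D (sqfree_part z) d) -/c.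
  rewrite phi_mul_smooth // natrM.
  move: ((moebius a)%:~R : R) ((gcdn (a * v) h)%:R : R) => M G.
  by field; rewrite phi0 vR aR.
rewrite phi_sum //.
have P0 : \prod_(q <- primes d) (1 - q%:R^-1) != 0 :> R.
  rewrite prodf_seq_neq0; apply/allP => q; rewrite mem_primes => /andP[pq _] /=.
  rewrite subr_eq0 eq_sym invr_eq1 pnatr_eq1; apply/negP => /eqP q1.
  by move: pq; rewrite q1.
case: ifP => gv.
  rewrite (gcd_smooth h0 vs gv).
  rewrite (eq_big_seq (fun q : nat => 1 - q%:R^-1)); last first.
    move=> q qd; case: ifP => // H; exfalso.
    have := dvdn_leq_log q v0 gv; rewrite logn_dinf //; lia.
  move: phi0; rewrite phiR //.
  move: (\prod_(q <- primes d) (1 - q%:R^-1)) P0 => P P0 phi0.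
  by field; rewrite P0 dR vR.
suff -> : \prod_(q <- primes d) (if (logn q v < logn q h)%N then 0 else 1 - q%:R^-1) = 0 :> R.
  by rewrite !mulr0.
apply/eqP; rewrite prodf_seq_eq0; apply/negPn/negP => /hasPn H.
move/negP: gv; apply; apply: dinf_dvd => // q qd.
have := H q qd; case: ifP => //; rewrite /= ?eqxx //; lia.
Qed.

Section Analysis.
Local Open Scope ereal_scope.

Lemma eseries_EFin (R : realType) (r : nat -> R) (l : R) :
  ((fun n => (\sum_(0 <= i < n) r i)%R) @ \oo --> l) ->
  \sum_(i <oo) (r i)%:E = l%:E.
Proof.
move=> H.
have E : (fun n => \sum_(0 <= i < n) (r i)%:E) = EFin \o (fun n => (\sum_(0 <= i < n) r i)%R).
  by apply/funext => n; rewrite /= sumEFin.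
rewrite E EFin_lim; last by apply: cvgP H.
by rewrite (cvg_lim _ H).
Qed.

Lemma geo_eseries (R : realType) (x c : R) : (0 <= x)%R -> (x < 1)%R ->
  \sum_(i <oo) ((x ^+ i)%:E * c%:E) = (c / (1 - x))%:E.
Proof.
move=> x0 x1.
have -> : (fun n => \sum_(0 <= i < n) ((x ^+ i)%:E * c%:E)) =
          (fun n => \sum_(0 <= i < n) (x ^+ i * c)%:E).
  by apply/funext => n; apply: eq_bigr => i _; rewrite EFinM.
apply: eseries_EFin.
have := @cvg_geometric_series R c x.
have -> : (`|x| = x)%R by rewrite ger0_norm.
move=> /(_ x1); apply: cvg_trans; apply: near_eq_cvg; apply: nearW => n /=.
by rewrite /series /=; apply: eq_bigr => i _; rewrite /geometric /= mulrC.
Qed.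

Lemma real_of_eseries (R : realType) (t : nat -> R) (l : R) :
  (forall n, (0 <= t n)%R) -> \sum_(i <oo) (t i)%:E = l%:E ->
  (fun N => (\sum_(0 <= v < N) t v)%R) @ \oo --> l.
Proof.
move=> t0 H.
have C : cvgn (fun n => \sum_(0 <= i < n) (t i)%:E).
  have := @is_cvg_nneseries R (fun i => (t i)%:E) xpredT 0%N.
  by apply => n _ _; rewrite lee_fin.
have C' : (fun n => \sum_(0 <= i < n) (t i)%:E) @ \oo --> l%:E by rewrite -H.
have E : (fun N => (\sum_(0 <= v < N) t v)%R) = fine \o (fun n => \sum_(0 <= i < n) (t i)%:E).
  by apply/funext => n; rewrite /= sumEFin.
rewrite E; exact: fine_cvg C'.
Qed.

End Analysis.

Lemma smooth_ndvd (L : seq nat) q j : prime q -> q \notin L ->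
  [pred p in L].-nat j -> ~~ (q %| j)%N.
Proof.
move=> pq qL js; apply/negP => qj; move/negP: qL; apply.
have j0 : (0 < j)%N by case/andP: js.
by have := pnatPpi js (_ : q \in \pi(j)); apply; rewrite /= mem_primes pq j0 qj.
Qed.

Lemma inv_sq_lt1 (R : realType) p : prime p -> (((p%:R : R) ^+ 2)^-1 < 1)%R.
Proof.
move=> pp; rewrite invf_lt1 ?exprn_gt0 ?ltr0n ?prime_gt0 //.
have p1 : (1 < (p%:R : R))%R by rewrite ltr1n prime_gt1.
by rewrite expr2; nra.
Qed.

Section Euler.
Local Open Scope ereal_scope.

Lemma euler (R : realType) (L : seq nat) : uniq L -> all prime L ->
  \sum_(u <oo | [pred p in L].-nat u) ((((u%:R : R) ^+ 2)^-1)%:E) =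
  (\prod_(p <- L) (1 - ((p%:R : R) ^+ 2)^-1)^-1)%:E.
Proof.
have f0 : forall u : nat, 0 <= ((((u%:R : R) ^+ 2)^-1)%:E).
  by move=> u; rewrite lee_fin invr_ge0 exprn_ge0.
elim: L => [|q L IH] /=.
  move=> _ _; rewrite big_nil nneseries_esum; last by move=> n _; exact: f0.
  have -> : [set x | [pred p in [::]].-nat x] = [set 1%N].
    apply/seteqP; split => [u /= us | u /= ->] //.
    have u0 : (0 < u)%N by case/andP: us.
    case: (ltnP 1 u) => [u1|]; last by rewrite /set1 /=; lia.
    have pdu : pdiv u \in \pi(u) by rewrite /= mem_primes pdiv_prime // u0 pdiv_dvd.
    by have := pnatPpi us pdu.
  by rewrite esum_set1 // expr1n invr1.
move=> /andP[qL uL] /andP[pq aL].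
have q0 := prime_gt0 pq.
set f := fun u : nat => ((((u%:R : R) ^+ 2)^-1)%:E).
set x : R := (((q%:R : R) ^+ 2)^-1)%R.
set S := [set u | [pred p in q :: L].-nat u].
set S' := [set u | [pred p in L].-nat u].
rewrite nneseries_esum; last by move=> n _; exact: f0.
rewrite -/S.
rewrite (reindex_esum (setT `*`` (fun=> S')) S (fun k => (q ^ k.1 * k.2)%N) f); last first.
  split.
  - move=> [i j] [_ /= js]; rewrite /S /= pnatM pnatX pnatE // inE eqxx /=.
    by apply: sub_in_pnat js => p _; rewrite !inE => ->; rewrite orbT.
  - move=> [i j] [i' j'] /set_mem[_ /= js] /set_mem[_ /= js'] /= E.
    have qj := smooth_ndvd pq qL js; have qj' := smooth_ndvd pq qL js'.
    have j0 : (0 < j)%N by case/andP: js.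
    have j'0 : (0 < j')%N by case/andP: js'.
    have ii : i = i'.
      have := congr1 (logn q) E.
      rewrite !lognM ?expn_gt0 ?q0 // !pfactorK // !logn_coprime ?prime_coprime //.
      by rewrite !addn0.
    subst i'; congr (_, _); apply/eqP; rewrite -(@eqn_pmul2l (q ^ i)) ?expn_gt0 ?q0 //.
    by apply/eqP.
  - move=> u us.
    have u0 : (0 < u)%N by case/andP: us.
    set k := logn q u.
    have qku : (q ^ k %| u)%N by apply: pfactor_dvdnn.
    exists (k, (u %/ q ^ k)%N); last by rewrite /= mulnC divnK.
    split => //=.
    have w0 : (0 < u %/ q ^ k)%N by rewrite divn_gt0 ?expn_gt0 ?q0 // dvdn_leq.
    apply/pnatP => // p pp pw.
    have pu : (p %| u)%N by apply: (dvdn_trans pw); apply: dvdn_div.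
    have : p \in q :: L by apply: (pnatPpi us); rewrite /= mem_primes pp u0.
    rewrite inE => /orP[/eqP Epq|//].
    have : (0 < logn p (u %/ q ^ k))%N by rewrite logn_gt0 mem_primes pp w0.
    by rewrite Epq logn_div // pfactorK // subnn.
rewrite -(@esum_esum _ _ _ setT (fun=> S') (fun i j => f (q ^ i * j)%N)); last by move=> i j _ _; exact: f0.
under eq_esum => i _.
  rewrite (_ : \esum_(j in S') f (q ^ i * j)%N = (x ^+ i)%:E * \sum_(j <oo | [pred p in L].-nat j) f j).
    over.
  rewrite -nneseriesZl; last by move=> n _; exact: f0.
  rewrite nneseries_esum; last first.
    move=> n _; apply: mule_ge0; last exact: f0.
    by rewrite lee_fin; apply: exprn_ge0; rewrite /x invr_ge0 exprn_ge0.
  apply: eq_esum => j _; rewrite /f /x -EFinM; congr (_%:E).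
  by rewrite natrM natrX exprMn invfM -!exprVn -!exprM mulnC.
rewrite IH //.
rewrite -nneseries_esumT; last first.
  move=> n; rewrite -EFinM lee_fin; apply: mulr_ge0.
    by apply: exprn_ge0; rewrite /x invr_ge0 exprn_ge0.
  rewrite big_seq; apply: prodr_ge0 => p pL.
  have pp : prime p by move/allP: aL; apply.
  by rewrite invr_ge0 subr_ge0 ltW // inv_sq_lt1.
have x0 : (0 <= x)%R by rewrite invr_ge0 exprn_ge0.
have x1 : (x < 1)%R by apply: inv_sq_lt1.
rewrite geo_eseries // big_cons; congr (_%:E).
by rewrite -/x mulrC.
Qed.

End Euler.

Unset Implicit Arguments. Set Strict Implicit.

Theorem lemma6p4 (R : realType) (a1 a2 : int) (alpha beta : algC) (h d : nat) :
  a1 != 0 -> a2 != 0 ->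
  'X^2 - (a1%:~R : algC)%:P * 'X - (a2%:~R : algC)%:P = ('X - alpha%:P) * ('X - beta%:P) ->
  (forall n : nat, (0 < n)%N -> (alpha / beta) ^+ n != 1) ->
  ~ (exists k : int, a1 ^+ 2 + 4 * a2 = k ^+ 2) ->
  is_max_pow (a1 ^+ 2 + 4 * a2) (alpha / beta) h ->
  (0 < d)%N -> odd d ->
  (sqfree_part (a1 ^+ 2 + 4 * a2) = -3 -> ~~ (3 %| d)%N) ->
  (fun N : nat => \sum_(0 <= v < N)
       lhs_term R (a1 ^+ 2 + 4 * a2) (sqfree_part (a1 ^+ 2 + 4 * a2)) h d v)
    @ \oo --> deltaU R (a1 ^+ 2 + 4 * a2) (sqfree_part (a1 ^+ 2 + 4 * a2)) h d.
Proof.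
move=> _ _ _ _ _ Hmax d0 _ _.
have h0 : (0 < h)%N by case: Hmax.
move: (a1 ^+ 2 + 4 * a2) => D.
set g := dinf_gcd d h.
have g0 : (0 < g)%N by apply: part_gt0.
set c := cst R D (sqfree_part D) d.
have c0 : (0 <= c)%R by rewrite /c /cst; case: ifP.
set K := (c * g%:R / d%:R)%R.
have K0 : (0 <= K)%R by rewrite /K divr_ge0 ?mulr_ge0 ?ler0n.
apply: real_of_eseries.
  move=> n; rewrite term_eq //; case: ifP => // _.
  by rewrite divr_ge0 ?exprn_ge0 ?ler0n.
set P := fun v => \pi(d).-nat v && (g %| v)%N.
have E1 : (fun n => \sum_(0 <= i < n) (lhs_term R D (sqfree_part D) h d i)%:E) =
          (fun n => \sum_(0 <= i < n | P i) (K / (i%:R ^+ 2))%:E)%E.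
  apply/funext => n; rewrite [RHS]big_mkcond; apply: eq_bigr => i _.
  by rewrite term_eq // /P; case: ifP.
rewrite E1 nneseries_esum; last first.
  by move=> n _; rewrite lee_fin divr_ge0 ?exprn_ge0 ?ler0n.
rewrite (reindex_esum [set u | \pi(d).-nat u] [set v | P v] (fun u => (g * u)%N)); last first.
  split.
  - move=> u /= us; rewrite /P pnatM us dvdn_mulr // andbT.
    by rewrite andbT; apply: part_pnat.
  - move=> u u' _ _ /eqP; rewrite eqn_pmul2l // => /eqP //.
  - move=> v /andP[vs gv]; exists (v %/ g)%N; last by rewrite /= mulnC divnK.
    rewrite /=; apply: pnat_div gv vs.
have gR : (g%:R : R) != 0 by rewrite pnatr_eq0 -lt0n.
under eq_esum => u _.
  rewrite (_ : (K / ((g * u)%N%:R ^+ 2))%:E =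
     ((K / (g%:R ^+ 2))%:E * (((u%:R : R) ^+ 2)^-1)%:E)%E); last first.
    by rewrite -EFinM natrM exprMn invfM mulrA.
  over.
rewrite -nneseries_esum; last first.
  move=> n _; rewrite -EFinM lee_fin; apply: mulr_ge0.
    by rewrite divr_ge0 // exprn_ge0.
  by rewrite invr_ge0 exprn_ge0.
rewrite nneseriesZl; last by move=> n _; rewrite lee_fin invr_ge0 exprn_ge0.
have Hall : all prime (primes d) by apply/allP => p; rewrite mem_primes => /andP[].
have EU : (\sum_(u <oo | \pi(d).-nat u) (((u%:R : R) ^+ 2)^-1)%:E)%E =
  (\prod_(p <- primes d) (1 - ((p%:R : R) ^+ 2)^-1)^-1)%:E :=
  euler R (primes_uniq d) Hall.
rewrite EU -EFinM; congr (_%:E).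
have dR : (d%:R : R) != 0 by rewrite pnatr_eq0 -lt0n.
rewrite /deltaU /etaU /K /c /cst -/g.
case: ifP => ex.
  have Ds : \pi(d).-nat `|sqfree_part D|%N.
    by move: ex; rewrite /excep => /norP[_ /negbNE].
  have D00 : (0 < `|sqfree_part D|)%N by case/andP: Ds.
  have Dd := sqf_dvd d0 Ds.
  rewrite (gcdn_idPr Dd) divnn D00 lcmn1.
  by field; rewrite gR dR.
by rewrite addr0; field; rewrite gR dR.
Qed.
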